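(* Let $\mathfrak g$ be of type $A_n$ and $i\in I$. For $b,b'\in\mathcal B(\infty)$, we have $\widetilde f_i^\ast(b)=b'$ if and only if $\widetilde e_i^\ast(b')=b$.
   Context: $I=\{1,\dots,n\}$. $\mathcal I=\{(s,t)\in\mathbb Z_{>0}\times I:s+t\le n+1\}$; $\mathcal B(\infty)$ is the set of $b=(b_{s,t})_{(s,t)\in\mathcal I}\in\mathbb Z_{\ge0}^{\mathcal I}$ with $b_{1,k}\ge b_{2,k-1}\ge\dots\ge b_{k,1}$ for $1\le k\le n$. Convention: $b_{s,t}=0$, $\mathbf e_{s,t}=0$ for $(s,t)\notin\mathcal I$. $\partial^\ast_{s,t}(b)=b_{s-1,t}-b_{s-1,t+1}-b_{s,t-1}+b_{s,t}$. For $1\le k\le i$: $\Sigma^\ast_k(b)=\sum_{t=1}^k\partial^\ast_{t,i+1-t}(b)$; $\varepsilon_i^\ast(b)=\max_k\Sigma_k^\ast(b)$; $m_i^\ast(b)$, $M_i^\ast(b)$ the smallest and largest maximizing $k$. $\widetilde f_i^\ast(b)=b+\sum_{t=1}^{m_i^\ast(b)}(\mathbf e_{t,i+1-t}-\mathbf e_{t-1,i+1-t})$; $\widetilde e_i^\ast(b)=b-\sum_{t=1}^{M_i^\ast(b)}(\mathbf e_{t,i+1-t}-\mathbf e_{t-1,i+1-t})$ if $\varepsilon_i^\ast(b)>0$, else $\widetilde e_i^\ast(b)=\mathbf 0$ (formal symbol). *)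

(* Defs.v *)
From HB Require Import structures.
From mathcomp Require Import all_boot all_order all_algebra.
Set Implicit Arguments. Unset Strict Implicit. Unset Printing Implicit Defensive.
Import Order.TTheory GRing.Theory Num.Theory.
Local Open Scope ring_scope.

(* An element of Z^{\mathcal I} is encoded as a function nat -> nat -> int
   which vanishes outside \mathcal I (this realizes the convention
   b_{s,t} = 0 for (s,t) \notin \mathcal I). *)
Definition vec := nat -> nat -> int.

Definition inI (n s t : nat) : bool :=
  [&& (0 < s)%N, (0 < t)%N, (t <= n)%N & (s + t <= n.+1)%N].

Definition inB (n : nat) (b : vec) : Prop :=
  [/\ (forall s t, ~~ inI n s t -> b s t = 0),
      (forall s t, inI n s t -> 0 <= b s t) &
      (forall k s, (1 <= k <= n)%N -> (1 <= s)%N -> (s < k)%N ->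
         b s.+1 (k - s)%N <= b s (k.+1 - s)%N)].

Definition evec (n s t : nat) : vec :=
  fun s' t' => if [&& s' == s, t' == t & inI n s t] then 1 else 0.

Definition vadd (b c : vec) : vec := fun s t => b s t + c s t.
Definition vsub (b c : vec) : vec := fun s t => b s t - c s t.
Definition vsum (m : nat) (F : nat -> vec) : vec :=
  fun s t => \sum_(1 <= k < m.+1) F k s t.

(* \partial^*_{s,t}(b) = b_{s-1,t} - b_{s-1,t+1} - b_{s,t-1} + b_{s,t};
   for s >= 1 and t >= 1 (s-1, t-1 are natural numbers; index 0 is outside I) *)
Definition dstar (b : vec) (s t : nat) : int :=
  b s.-1 t - b s.-1 t.+1 - b s t.-1 + b s t.

Definition Sigma (i : nat) (b : vec) (k : nat) : int :=
  \sum_(1 <= t < k.+1) dstar b t (i.+1 - t)%N.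

Definition eps_star (i : nat) (b : vec) : int :=
  \big[Num.max/Sigma i b 1]_(1 <= k < i.+1) Sigma i b k.

Definition m_star (i : nat) (b : vec) : nat :=
  head 0%N [seq k <- iota 1 i | Sigma i b k == eps_star i b].
Definition M_star (i : nat) (b : vec) : nat :=
  last 0%N [seq k <- iota 1 i | Sigma i b k == eps_star i b].

Definition step (n i t : nat) : vec :=
  vsub (evec n t (i.+1 - t)%N) (evec n t.-1 (i.+1 - t)%N).

Definition f_star (n i : nat) (b : vec) : vec :=
  vadd b (vsum (m_star i b) (step n i)).

(* \widetilde e^*_i ; None stands for the formal symbol 0 *)
Definition e_star (n i : nat) (b : vec) : option vec :=
  if 0 < eps_star i b then Some (vsub b (vsum (M_star i b) (step n i)))
  else None.

(* Main.v *)
Require Import Defs.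
From HB Require Import structures.
From mathcomp Require Import all_boot all_order all_algebra.
From mathcomp Require Import zify ring lra.
From Stdlib Require Import FunctionalExtensionality.
Set Implicit Arguments. Unset Strict Implicit. Unset Printing Implicit Defensive.
Import Order.TTheory GRing.Theory Num.Theory.
Local Open Scope ring_scope.

Lemma evec1 n a c s t : s = a -> t = c -> inI n a c -> evec n a c s t = 1.
Proof. by move=> -> -> H; rewrite /evec !eqxx H. Qed.

Lemma evec0 n a c s t : (s <> a \/ t <> c) -> evec n a c s t = 0.
Proof.
rewrite /evec => H; case: ifP => // /and3P [/eqP h1 /eqP h2 _]; by case: H.
Qed.

Lemma evec0I n a c s t : ~~ inI n a c -> evec n a c s t = 0.
Proof. by rewrite /evec => /negbTE ->; rewrite !andbF. Qed.

Ltac inI_tac := rewrite /inI; apply/and4P; split; lia.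

Definition D n i m := vsum m (step n i).

Lemma vsumS m F s t : vsum m.+1 F s t = vsum m F s t + F m.+1 s t.
Proof. by rewrite /vsum big_nat_recr. Qed.
Lemma vsum0 F s t : vsum 0 F s t = 0.
Proof. by rewrite /vsum big_geq. Qed.

Lemma D_top n i m k : (i <= n)%N -> (m <= i)%N -> (1 <= k <= i)%N ->
  D n i m k (i.+1 - k)%N = if (k <= m)%N then 1 else 0.
Proof.
move=> hin; elim: m => [|m IH] hm hk.
  by rewrite /D vsum0; case: leqP => //; lia.
rewrite /D vsumS -/(D n i m) (IH (ltnW hm) hk).
rewrite /step /vsub /=.
have [->|hne] := eqVneq k m.+1.
  rewrite evec1 //; last inI_tac.
  rewrite evec0; last lia.
  rewrite leqnn; case: leqP => //; lia.
rewrite (@evec0 _ m.+1); last by left; apply/eqP.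
rewrite evec0; last lia.
rewrite [(k <= m.+1)%N]leq_eqVlt ltnS (negbTE hne) /=; case: leqP => _; lia.
Qed.

Lemma D_bot n i m k : (i <= n)%N -> (m <= i)%N -> (1 <= k <= i)%N ->
  D n i m k (i - k)%N = if (k < m)%N then -1 else 0.
Proof.
move=> hin; elim: m => [|m IH] hm hk.
  by rewrite /D vsum0; case: leqP => //; lia.
rewrite /D vsumS -/(D n i m) (IH (ltnW hm) hk).
rewrite /step /vsub /=.
rewrite (@evec0 _ m.+1); last lia.
have [ekm|hne] := eqVneq k m.
  subst k; rewrite evec1 //; last inI_tac.
  rewrite ltnn ltnSn; by [].
rewrite evec0; last by left; apply/eqP.
rewrite [(k < m.+1)%N]ltnS [(k <= m)%N]leq_eqVlt (negbTE hne) /=; case: ltnP => _; lia.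
Qed.

Lemma evec_out n a c s t : ~~ inI n s t -> evec n a c s t = 0.
Proof.
move=> H; rewrite /evec; case: ifP => // /and3P [/eqP e1 /eqP e2 h].
by subst; rewrite h in H.
Qed.

Lemma D_out n i m s t : ~~ inI n s t -> D n i m s t = 0.
Proof.
move=> H; elim: m => [|m IH]; first by rewrite /D vsum0.
by rewrite /D vsumS -/(D n i m) IH /step /vsub !evec_out // subr0 addr0.
Qed.
Lemma bigmax_ge (F : nat -> int) x0 (s : seq nat) k :
  k \in s -> F k <= \big[Num.max/x0]_(j <- s) F j.
Proof.
elim: s => [|a s IH] //; rewrite in_cons big_cons le_max => /orP [/eqP ->|/IH ->].
  by rewrite lexx.
by rewrite orbT.
Qed.

Lemma bigmax_ex (F : nat -> int) x0 (s : seq nat) :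
  \big[Num.max/x0]_(j <- s) F j = x0 \/ exists2 k, k \in s & F k = \big[Num.max/x0]_(j <- s) F j.
Proof.
elim: s => [|a s IH]; first by left; rewrite big_nil.
rewrite big_cons maxEle; case: ifP => _.
  case: IH => [->|[k ks e]]; first by left.
  by right; exists k; rewrite ?in_cons ?ks ?orbT.
by right; exists a => //; rewrite in_cons eqxx.
Qed.

Lemma head_filter (P : pred nat) a n :
  (exists2 k, (a <= k < a + n)%N & P k) ->
  let h := head 0%N [seq k <- iota a n | P k] in
  [/\ (a <= h < a + n)%N, P h & forall k, (a <= k < h)%N -> ~~ P k].
Proof.
elim: n a => [|n IH] a [k hk pk]; first by lia.
rewrite /= ; case: ifP => pa /=.
  split => //; first by lia.
  move=> j hj; lia.
have hk' : (a.+1 <= k < a.+1 + n)%N.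
  have : k != a by apply/eqP => e; subst; rewrite pk in pa.
  move/eqP; lia.
have [h1 h2 h3] := IH a.+1 (ex_intro2 _ _ k hk' pk).
split => //; first by lia.
move=> j hj; have [->|ne] := eqVneq j a; first by rewrite pa.
apply: h3; move/eqP: ne; lia.
Qed.

Lemma last_filter (P : pred nat) a n :
  (exists2 k, (a <= k < a + n)%N & P k) ->
  let l := last 0%N [seq k <- iota a n | P k] in
  [/\ (a <= l < a + n)%N, P l & forall k, (l < k < a + n)%N -> ~~ P k].
Proof.
elim: n => [|n IH] [k hk pk]; first by lia.
rewrite -addn1 iotaD cats1 filter_rcons; case: ifP => pa /=.
  rewrite last_rcons; split => //; first by lia.
  move=> j hj; lia.
have hk' : (a <= k < a + n)%N.
  have : k != (a + n)%N by apply/eqP => e; subst; rewrite pk in pa.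
  move/eqP; lia.
have [h1 h2 h3] := IH (ex_intro2 _ _ k hk' pk).
split => //; first by lia.
move=> j hj; have [->|ne] := eqVneq j (a + n)%N; first by rewrite pa.
apply: h3; move/eqP: ne; lia.
Qed.

Lemma SigmaE i b k : (forall t, b 0%N t = 0) -> (k <= i)%N ->
  Sigma i b k = b k (i.+1 - k)%N - b k (i - k)%N.
Proof.
move=> hz; elim: k => [|k IH] hk.
  by rewrite /Sigma big_geq // !hz subrr.
rewrite /Sigma big_nat_recr //= -/(Sigma i b k) IH ?(ltnW hk) // /dstar /=.
rewrite subSS -subSn; last by lia.
rewrite -subnS; lia.
Qed.

Lemma Sigma_add n i m b k : (1 <= i <= n)%N -> (forall t, b 0%N t = 0) ->
  (m <= i)%N -> (1 <= k <= i)%N ->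
  Sigma i (vadd b (D n i m)) k =
  Sigma i b k + (if (k <= m)%N then 1 else 0) + (if (k < m)%N then 1 else 0).
Proof.
move=> hi hz hm hk.
rewrite !SigmaE //; try lia; last by move=> t; rewrite /vadd hz D_out.
rewrite /vadd D_top ?D_bot //; try lia.
case: (leqP k m); case: (ltnP k m) => *; lia.
Qed.

Lemma Sigma_sub n i m b k : (1 <= i <= n)%N -> (forall t, b 0%N t = 0) ->
  (m <= i)%N -> (1 <= k <= i)%N ->
  Sigma i (vsub b (D n i m)) k =
  Sigma i b k - (if (k <= m)%N then 1 else 0) - (if (k < m)%N then 1 else 0).
Proof.
move=> hi hz hm hk.
rewrite !SigmaE //; try lia; last by move=> t; rewrite /vsub hz D_out.
rewrite /vsub D_top ?D_bot //; try lia.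
case: (leqP k m); case: (ltnP k m) => *; lia.
Qed.

Lemma eps_ge i b k : (1 <= k <= i)%N -> Sigma i b k <= eps_star i b.
Proof. by move=> hk; rewrite /eps_star; apply: bigmax_ge; rewrite mem_index_iota; lia. Qed.

Lemma eps_ex i b : (1 <= i)%N -> exists2 k, (1 <= k < 1 + i)%N & Sigma i b k == eps_star i b.
Proof.
move=> hi; rewrite /eps_star.
case: (bigmax_ex (Sigma i b) (Sigma i b 1) (index_iota 1 i.+1)) => [->|[k hk e]].
  by exists 1%N; rewrite ?eqxx //; lia.
by exists k; rewrite ?e ?eqxx //; move: hk; rewrite mem_index_iota; lia.
Qed.

Lemma eps_nonneg n i b : (1 <= i <= n)%N -> inB n b -> 0 <= eps_star i b.
Proof.
move=> hi [h0 hp _].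
apply: le_trans (eps_ge b (_ : (1 <= i <= i)%N)); last lia.
rewrite SigmaE //; last by move=> t; apply: h0.
rewrite subnn subSn // subnn.
rewrite (h0 i 0%N) ?subr0; [apply: hp; inI_tac | by rewrite /inI /= andbF].
Qed.

Theorem proposition6p6 (n i : nat) (b b' : vec) :
  (1 <= i <= n)%N -> inB n b -> inB n b' ->
  (f_star n i b = b' <-> e_star n i b' = Some b).
Proof.
move=> hi hB hB'.
have hz : forall (c : vec), inB n c -> forall t, c 0%N t = 0.
  by move=> c [h0 _ _] t; apply: h0.
have hi1 : (1 <= i)%N by lia.
split.
- move=> <-.
  set m := m_star i b.
  have [hm1 /eqP hm2 hm3] := head_filter (eps_ex b hi1).
  rewrite -/(m_star i b) -/m in hm1 hm2 hm3.
  set E := eps_star i b in hm2 hm3.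
  have hE0 : 0 <= E := eps_nonneg hi hB.
  change (f_star n i b) with (vadd b (D n i m)).
  set c := vadd b (D n i m).
  have hS : forall k, (1 <= k <= i)%N ->
      Sigma i c k = Sigma i b k + (if (k <= m)%N then 1 else 0) + (if (k < m)%N then 1 else 0).
    by move=> k hk; apply: Sigma_add => //; [apply: hz | lia].
  have hE' : eps_star i c = E + 1.
    have h1 := @eps_ge i c m ltac:(lia).
    rewrite hS ?leqnn ?ltnn in h1; last by lia.
    have [k1 hk1 /eqP e1] := eps_ex c hi1.
    have hk1' : (1 <= k1 <= i)%N by lia.
    have h3 := eps_ge b hk1'; rewrite -/E in h3.
    move: e1; rewrite hS //.
    case: (leqP k1 m); case: (ltnP k1 m) => a1 a2 e1; try lia.
    have := hm3 k1 ltac:(lia); move/eqP => h4; lia.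
  have [hl1 /eqP hl2 hl3] := last_filter (eps_ex c hi1).
  rewrite -/(M_star i c) in hl1 hl2 hl3.
  have hM : M_star i c = m.
    set l := M_star i c in hl1 hl2 hl3 *.
    have [lm|ml|->] := ltngtP l m; last by [].
    + have := hl3 m ltac:(lia); rewrite hS ?leqnn ?ltnn; last lia.
      by rewrite hE' hm2 addr0 eqxx.
    + have h := hS l ltac:(lia); have h3 := @eps_ge i b l ltac:(lia); rewrite -/E in h3.
      move: hl2; rewrite hE' h.
      case: (leqP l m); case: (ltnP l m) => a1 a2; try lia.
      all: idtac.
  rewrite /e_star hM ifT; last by rewrite hE'; lia.
  congr Some; apply: functional_extensionality => s; apply: functional_extensionality => t.
  rewrite /vsub /c /vadd /D; lia.
- rewrite /e_star; case: ifP => // hpos [<-].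
  set E' := eps_star i b' in hpos.
  have [hl1 /eqP hl2 hl3] := last_filter (eps_ex b' hi1).
  rewrite -/(M_star i b') in hl1 hl2 hl3.
  set M := M_star i b' in hl1 hl2 hl3 *.
  change (vsum M (step n i)) with (D n i M).
  set c := vsub b' (D n i M).
  have hS : forall k, (1 <= k <= i)%N ->
      Sigma i c k = Sigma i b' k - (if (k <= M)%N then 1 else 0) - (if (k < M)%N then 1 else 0).
    by move=> k hk; apply: Sigma_sub => //; [apply: hz | lia].
  have hE : eps_star i c = E' - 1.
    have h1 := @eps_ge i c M ltac:(lia).
    rewrite hS ?leqnn ?ltnn in h1; last by lia.
    have [k1 hk1 /eqP e1] := eps_ex c hi1.
    have hk1' : (1 <= k1 <= i)%N by lia.
    have h3 := eps_ge b' hk1'; rewrite -/E' in h3.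
    move: e1; rewrite hS //.
    case: (leqP k1 M); case: (ltnP k1 M) => a1 a2 e1; try lia.
    have := hl3 k1 ltac:(lia); move/eqP => h4; lia.
  have [hm1 /eqP hm2 hm3] := head_filter (eps_ex c hi1).
  rewrite -/(m_star i c) in hm1 hm2 hm3.
  have hm : m_star i c = M.
    set h := m_star i c in hm1 hm2 hm3 *.
    have [hM|Mh|->] := ltngtP h M; last by [].
    + have h0 := hS h ltac:(lia); have h3 := @eps_ge i b' h ltac:(lia); rewrite -/E' in h3.
      move: hm2; rewrite hE h0.
      case: (leqP h M); case: (ltnP h M) => a1 a2; try lia.
      all: idtac.
    + have := hm3 M ltac:(lia); rewrite hS ?leqnn ?ltnn; last lia.
      by rewrite hE hl2 subr0 eqxx.
  rewrite /f_star hm -/(D n i M).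
  apply: functional_extensionality => s; apply: functional_extensionality => t.
  rewrite /c /vsub /vadd; lia.
Qed.
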